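(* Let $\gamma:=\prod_{j=1}^\infty(1-2^{-j})$. For every integer $a\ge 1$ there is a sequence of examples, indexed by $m\to\infty$, each consisting of integers $n$ and a set $U\subseteq\mathbb{F}_2^n\setminus\{0\}$ of $|U|=2^m$ distinct nonzero vectors, such that for a uniformly random linear map $B:\mathbb{F}_2^n\to\mathbb{F}_2^m$, \[ \liminf_{m\to\infty}\Pr\left[|\{u\in U: Bu=0\}|>2^a-2\right]\ge\gamma^{-1}2^{-a^2}(1-2^{-a})^2. \]
   Context: A uniformly random linear map $\mathbb{F}_2^n\to\mathbb{F}_2^m$ is one chosen uniformly among all linear maps. *)

(* Defs.v *)
From mathcomp Require Import all_boot all_order all_algebra.
From mathcomp Require Import all_classical all_reals all_analysis.
Set Implicit Arguments. Unset Strict Implicit. Unset Printing Implicit Defensive.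
Import Order.TTheory GRing.Theory Num.Theory.
Local Open Scope ring_scope.

Definition gamma_const (R : realType) : R :=
  limn (fun N : nat => \prod_(1 <= j < N.+1) (1 - (2%:R : R) ^- j)).

Definition kernel_hits (m n : nat) (B : 'M['F_2]_(m, n))
  (U : {set 'cV['F_2]_n}) : nat :=
  #|[set u in U | B *m u == 0]|.

Definition prob_hits_gt (R : realType) (m n : nat)
  (U : {set 'cV['F_2]_n}) (k : nat) : R :=
  (#|[set B : 'M['F_2]_(m, n) | (k < kernel_hits B U)%N]|%:R)
  / (#|{: 'M['F_2]_(m, n)}|%:R).

(* Main.v *)
Require Import Defs.
From mathcomp Require Import all_boot all_order all_algebra.
From mathcomp Require Import all_classical all_reals all_analysis.
From mathcomp Require Import ring lra zify.
Import Order.TTheory GRing.Theory Num.Theory.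
Local Open Scope ring_scope.

Module c1.
Local Open Scope ring_scope.

Lemma card_F2 : #|'F_2| = 2%N.
Proof. by rewrite card_Fp. Qed.

Lemma card_rowspace k m (A : 'M['F_2]_(k, m)) :
  #|[set v : 'rV['F_2]_m | (v <= A)%MS]| = (2 ^ \rank A)%N.
Proof.
have -> : [set v : 'rV['F_2]_m | (v <= A)%MS] =
   [set w *m row_base A | w : 'rV['F_2]_(\rank A)].
  apply/setP => v; rewrite inE; apply/idP/imsetP.
  - move=> vA; have : (v <= row_base A)%MS by rewrite eq_row_base.
    by move=> /submxP [w ->]; exists w.
  - by case=> w _ ->; apply: submx_trans (submxMl _ _) _; rewrite eq_row_base.
rewrite card_imset; last exact: row_free_inj (row_base_free A).
by move: (card_mx 'F_2 1 (\rank A)); rewrite card_F2 mul1n. 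
Qed.

Lemma rank_col_mx1 k m (v : 'rV['F_2]_m) (A : 'M['F_2]_(k, m)) :
  \rank (col_mx v A) = (\rank A + ~~ (v <= A)%MS)%N.
Proof.
rewrite -addsmxE; case: (boolP (v <= A)%MS) => H.
  by rewrite (addsmx_idPr H) addn0.
have := mxrank_sum_cap v A.
have rv : \rank v = 1%N.
  apply/eqP; rewrite eqn_leq rank_leq_row lt0n mxrank_eq0.
  by apply: contraNneq H => ->; rewrite sub0mx.
have rc : \rank (v :&: A)%MS = 0%N.
  have := mxrank_leqif_sup (capmxSl v A).
  move=> /leqifP; case: ifP.
    by move=> /(submx_trans)/(_ (capmxSr v A)); rewrite (negbTE H).
  by rewrite rv ltnS leqn0 => _ /eqP.
by rewrite rc rv addn0 addnC => ->.
Qed.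

Definition Nrk m k r := #|[set A : 'M['F_2]_(k, m) | \rank A == r]|.

Lemma Nrk_S m k r : Nrk m k.+1 r =
  (\sum_(A : 'M['F_2]_(k, m)) #|[set v : 'rV['F_2]_m | \rank (col_mx v A) == r]|)%N.
Proof.
rewrite /Nrk -sum1_card (partition_big (@dsubmx _ 1 k m) xpredT) //=.
apply: eq_bigr => A _; rewrite (reindex (col_mx^~ A)) /=; last first.
  exists usubmx => [v _ | B]; first by rewrite col_mxKu.
  by rewrite inE => /andP[_ /eqP <-]; rewrite vsubmxK.
rewrite -sum1_card; apply: eq_bigl => v; rewrite !inE col_mxKd eqxx andbT.
done.
Qed.

Lemma count_v m k s (A : 'M['F_2]_(k, m)) :
  #|[set v : 'rV['F_2]_m | \rank (col_mx v A) == s.+1]| =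
  ((\rank A == s.+1) * 2 ^ s.+1 + (\rank A == s) * (2 ^ m - 2 ^ s))%N.
Proof.
have [e|ne] := eqVneq (\rank A) s.+1.
  rewrite e /= mul1n (_ : (s.+1 == s) = false) ?mul0n ?addn0; last by rewrite eqn_leq ltnn.
  rewrite -e -(@card_rowspace _ _ A).
  apply: eq_card => v; rewrite !inE rank_col_mx1.
  by case: (v <= A)%MS; rewrite /= ?addn0 ?eqxx // -[X in _ == X]addn0 eqn_add2l.
rewrite /= mul0n add0n.
have [e'|ne'] := eqVneq (\rank A) s.
  rewrite mul1n -e' -(@card_rowspace _ _ A).
  have := cardsC [set v : 'rV['F_2]_m | (v <= A)%MS].
  have -> : #|'rV['F_2]_m| = (2 ^ m)%N by move: (card_mx 'F_2 1 m); rewrite card_F2 mul1n.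
  move=> <-; rewrite addKn; apply: eq_card => v; rewrite !inE rank_col_mx1.
  by case: (v <= A)%MS; rewrite /= ?addn0 ?addn1 ?eqxx // e' ltn_eqF.
rewrite /= mul0n; apply/eqP; rewrite cards_eq0; apply/eqP/setP => v; rewrite !inE rank_col_mx1.
by case: (v <= A)%MS; rewrite /= ?addn0 ?addn1 ?eqSS; apply/negbTE.
Qed.

Lemma sum_rank_eq m k r :
  (\sum_(A : 'M['F_2]_(k, m)) (\rank A == r))%N = Nrk m k r.
Proof.
rewrite /Nrk -sum1_card [RHS]big_mkcond /=; apply: eq_bigr => A _; rewrite inE.
by case: eqP.
Qed.

Lemma Nrk_rec m k s : Nrk m k.+1 s.+1 =
  (Nrk m k s.+1 * 2 ^ s.+1 + Nrk m k s * (2 ^ m - 2 ^ s))%N.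
Proof.
rewrite Nrk_S; under eq_bigr do rewrite count_v.
by rewrite big_split /= -!big_distrl /= !sum_rank_eq.
Qed.

Lemma Nrk_0 m k : Nrk m k 0 = 1%N.
Proof.
rewrite /Nrk (_ : [set A : 'M['F_2]_(k, m) | \rank A == 0%N] = [set 0]) ?cards1 //.
by apply/setP => A; rewrite !inE mxrank_eq0.
Qed.

Lemma Nrk_gt m k r : (k < r)%N -> Nrk m k r = 0%N.
Proof.
move=> kr; apply/eqP; rewrite cards_eq0; apply/eqP/setP => A; rewrite !inE.
apply/negbTE; apply: contraTneq kr => <-; by rewrite -leqNgt rank_leq_row.
Qed.

End c1.
Import c1.

Module c2.
Local Open Scope ring_scope.

Section R.
Variable R : realType.
Definition hf : R := 2^-1.
Definition E (j : nat) : R := 1 - hf ^+ j.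
Definition Pi (l u : nat) : R := \prod_(l.+1 <= j < u.+1) E j.

Lemma Pi_nil l : Pi l l = 1.
Proof. by rewrite /Pi big_geq. Qed.

Lemma Pi_recr l u : (l <= u)%N -> Pi l u.+1 = Pi l u * E u.+1.
Proof. by move=> lu; rewrite /Pi big_nat_recr. Qed.

Lemma Pi_recl l u : (l < u)%N -> Pi l u = E l.+1 * Pi l.+1 u.
Proof. by move=> lu; rewrite /Pi big_ltn. Qed.

Lemma two_hf : 2 * hf = 1.
Proof. by rewrite /hf mulfV // pnatr_eq0. Qed.

Lemma pow2hf n : (2 ^ n)%:R * hf ^+ n = 1.
Proof. by rewrite natrX -exprMn two_hf expr1n. Qed.


Lemma closed_form m k r : (r <= k)%N -> (r <= m)%N ->
  (Nrk m k r)%:R * hf ^+ (k * m) * Pi 0 (k - r) =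
  hf ^+ ((k - r) * (m - r)) * Pi (m - r) m * Pi r k.
Proof.
elim: k r => [|k IH] r.
  rewrite leqn0 => /eqP -> _; rewrite Nrk_0 !Pi_nil subn0.
  by rewrite !mul0n expr0 !subn0 Pi_nil !mulr1.
case: r => [|s] rk rm.
  by rewrite Nrk_0 !subn0 Pi_nil mulr1 mul1r.
have {}rk : (s <= k)%N by [].
rewrite Nrk_rec natrD !natrM natrB; last by rewrite leq_exp2l // ltnW.
have [sk|ks] := eqVneq s k.
  subst s; rewrite Nrk_gt // mul0r add0r subnn mul0n expr0 mul1r Pi_nil !mulr1.
  have := IH k (leqnn k) (ltnW rm).
  rewrite subnn mul0n expr0 mul1r !Pi_nil !mulr1 => IHk.
  set e := (m - k.+1)%N.
  have me : m = (k.+1 + e)%N by rewrite subnKC.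
  have -> : Pi e m = E e.+1 * Pi (m - k) m.
    rewrite (@Pi_recl e m); last by rewrite me; lia.
    by have -> : (m - k)%N = e.+1 by rewrite me; lia.
  rewrite -IHk mulSn exprD.
  have hm : hf ^+ m = hf ^+ k * hf ^+ e.+1 by rewrite -exprD me addSnnS.
  set N := (Nrk m k k)%:R.
  transitivity (N * hf ^+ (k * m) * ((2 ^ m)%:R * hf ^+ m - (2 ^ k)%:R * hf ^+ k * hf ^+ e.+1)).
    by rewrite hm; ring.
  by rewrite !pow2hf mul1r /E; ring.
have sk : (s < k)%N by rewrite ltn_neqAle ks.
have IH1 := IH s.+1 sk rm.
have IH2 := IH s rk (ltnW rm).
set c := (k - s.+1)%N in IH1.
set e := (m - s.+1)%N in IH1.
have kc : k = (s.+1 + c)%N by rewrite subnKC.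
have me : m = (s.+1 + e)%N by rewrite subnKC.
have -> : (k.+1 - s.+1)%N = c.+1 by rewrite kc; lia.
have -> : (m - s.+1)%N = e by [].
have e1 : (k - s)%N = c.+1 by rewrite kc; lia.
have e2 : (m - s)%N = e.+1 by rewrite me; lia.
rewrite e1 e2 in IH2.
rewrite (@Pi_recr 0 c) // in IH2 *.
rewrite (@Pi_recl e m) in IH1 *; last by rewrite me; lia.
rewrite (@Pi_recl s k) in IH2; last by [].
rewrite (@Pi_recr s.+1 k) //.
set N1 := (Nrk m k s.+1)%:R in IH1 *.
set N0 := (Nrk m k s)%:R in IH2 *.
set P0 := Pi 0 c in IH1 IH2 *.
set Pe := Pi e.+1 m in IH1 IH2 *.
set Ps := Pi s.+1 k in IH1 IH2 *.
rewrite mulSn exprD.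
have hm1 : hf ^+ m = hf ^+ s.+1 * hf ^+ e by rewrite -exprD me.
have hm2 : hf ^+ m = hf ^+ s * hf ^+ e.+1 by rewrite -exprD me addSnnS.
transitivity ((N1 * hf ^+ (k * m) * P0) * (((2 ^ s.+1)%:R * hf ^+ s.+1) * hf ^+ e * E c.+1)
  + (N0 * hf ^+ (k * m) * (P0 * E c.+1)) * ((2 ^ m)%:R * hf ^+ m - ((2 ^ s)%:R * hf ^+ s) * hf ^+ e.+1)).
  rewrite -[((2 ^ s)%:R * hf ^+ s) * hf ^+ e.+1]mulrA -hm2.
  rewrite -[((2 ^ s.+1)%:R * hf ^+ s.+1) * hf ^+ e]mulrA -hm1.
  ring.
rewrite IH1 IH2 !pow2hf.
have x1 : hf ^+ (c.+1 * e.+1) = hf ^+ (c * e) * hf ^+ e * hf ^+ c.+1.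
  by rewrite -!exprD; congr (_ ^+ _); lia.
have x2 : hf ^+ (c.+1 * e) = hf ^+ (c * e) * hf ^+ e.
  by rewrite -!exprD; congr (_ ^+ _); lia.
have x3 : E k.+1 = 1 - hf ^+ c.+1 * hf ^+ s.+1.
  by rewrite /E -exprD kc; congr (_ - _ ^+ _); lia.
rewrite x1 x2 x3 /E; ring.
Qed.
End R.

End c2.
Import c2.

Module c3.
Local Open Scope ring_scope.

Lemma card_cV m : #|'cV['F_2]_m| = (2 ^ m)%N.
Proof. by move: (card_mx 'F_2 m 1); rewrite card_F2 muln1. Qed.

Lemma card_ker m (M : 'M['F_2]_(m, m)) :
  #|[set w : 'cV['F_2]_m | M *m w == 0]| = (2 ^ (m - \rank M))%N.
Proof.
have -> : [set w : 'cV['F_2]_m | M *m w == 0] =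
   [set v^T | v in [set v : 'rV['F_2]_m | (v <= kermx M^T)%MS]].
  apply/setP => w; rewrite inE; apply/idP/imsetP.
  - move=> Mw; exists w^T; last by rewrite trmxK.
    by rewrite inE sub_kermx -trmx_mul (eqP Mw) trmx0.
  - case=> v; rewrite inE sub_kermx => /eqP vM ->.
    by rewrite -(trmxK M) -trmx_mul vM trmx0.
rewrite card_imset; last exact: trmx_inj.
by rewrite card_rowspace mxrank_ker mxrank_tr.
Qed.

Definition Uset m : {set 'cV['F_2]_(1 + m)} :=
  [set col_mx (if w == 0 then 1 else 0 : 'cV['F_2]_1) w | w : 'cV['F_2]_m].

Lemma Uset_prop m : 0 \notin Uset m /\ #|Uset m| = (2 ^ m)%N.
Proof.
split.
  apply/imsetP => -[w _] /esym /eqP; rewrite col_mx_eq0.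
  case: ifP => [_|nw] /andP[]; first by rewrite oner_eq0.
  by move=> _ h; move: nw; rewrite h.
rewrite card_imset ?card_cV // => w1 w2 /eq_col_mx [_ ->] //.
Qed.

Lemma hits_ge m (B : 'M['F_2]_(m, 1 + m)) :
  (2 ^ (m - \rank (rsubmx B)) - 1 <= kernel_hits B (Uset m))%N.
Proof.
set M := rsubmx B.
pose K' := [set w : 'cV['F_2]_m | (w != 0) && (M *m w == 0)].
have -> : (2 ^ (m - \rank M) - 1 = #|K'|)%N.
  rewrite -card_ker (cardsD1 0) inE mulmx0 eqxx add1n subn1 /=.
  by apply: eq_card => w; rewrite !inE andbC.
rewrite /kernel_hits.
have inj : injective (fun w : 'cV['F_2]_m => col_mx (0 : 'cV['F_2]_1) w).
  by move=> w1 w2 /eq_col_mx [_ ->].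
rewrite -(card_imset K' inj); apply: subset_leq_card; apply/fintype.subsetP => _ /imsetP[w Kw ->].
move: Kw; rewrite !inE => /andP[nw Mw]; apply/andP; split.
  by apply/imsetP; exists w => //; rewrite (negbTE nw).
by rewrite -[B]hsubmxK mul_row_col mulmx0 add0r.
Qed.

Lemma count_B m r :
  (2 ^ m * Nrk m m r <= #|[set B : 'M['F_2]_(m, 1 + m) | \rank (rsubmx B) == r]|)%N.
Proof.
rewrite /Nrk -card_cV -cardsT -cardsX.
have inj : injective (fun p : 'cV['F_2]_m * 'M['F_2]_(m, m) => row_mx p.1 p.2).
  by move=> [c1 M1] [c2 M2] /= /eq_row_mx [-> ->].
rewrite -(card_imset _ inj); apply: subset_leq_card.
apply/fintype.subsetP => _ /imsetP[[c M] cM ->]; rewrite inE row_mxKr.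
by move: cM; rewrite !inE.
Qed.

Lemma event_sub m a : (1 <= a)%N -> (a <= m)%N ->
  [set B : 'M['F_2]_(m, 1 + m) | \rank (rsubmx B) == (m - a)%N] \subset
  [set B : 'M['F_2]_(m, 1 + m) | (2 ^ a - 2 < kernel_hits B (Uset m))%N].
Proof.
move=> a1 am; apply/fintype.subsetP => B; rewrite !inE => /eqP rB.
have := @hits_ge m B; rewrite rB subKn //.
have : (2 <= 2 ^ a)%N by rewrite -{1}(expn1 2) leq_exp2l.
lia.
Qed.

End c3.
Import c3.

Module c4.
Local Open Scope ring_scope.

Section S.
Variable R : realType.
Local Notation hf := (@hf R).
Local Notation E := (@E R).
Local Notation Pi := (@Pi R).

Lemma hf_gt0 : 0 < hf.
Proof. by rewrite /c2.hf invr_gt0. Qed.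

Lemma hf_half : hf = 1 / 2.
Proof. by rewrite /c2.hf div1r. Qed.

Lemma hfX_ge0 j : 0 <= hf ^+ j.
Proof. exact/exprn_ge0/ltW/hf_gt0. Qed.

Lemma hf_le1 : hf <= 1.
Proof. rewrite hf_half; lra. Qed.

Lemma hfX_le1 j : hf ^+ j <= 1.
Proof. exact/exprn_ile1/hf_le1/ltW/hf_gt0. Qed.

Lemma hfX_mono i j : (i <= j)%N -> hf ^+ j <= hf ^+ i.
Proof. move=> ij; rewrite -(subnKC ij) exprD ler_piMr // ?hfX_ge0 ?hfX_le1 //. Qed.

Lemma E_gt0 j : (0 < j)%N -> 0 < E j.
Proof.
move=> j0; rewrite /c2.E subr_gt0; case: j j0 => // j _.
have := hfX_le1 j; have := hfX_ge0 j; rewrite exprS hf_half; nra.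
Qed.

Lemma E_le1 j : E j <= 1.
Proof. have := hfX_ge0 j; rewrite /c2.E; lra. Qed.

Lemma Pi_gt0 l u : 0 < Pi l u.
Proof.
rewrite /c2.Pi big_nat; apply: prodr_gt0 => j /andP[lj _]; apply: E_gt0.
exact: leq_trans lj.
Qed.

Lemma Pi_ge l u : (l <= u)%N -> 1 - hf ^+ l + hf ^+ u <= Pi l u.
Proof.
elim: u => [|u IH]; first by rewrite leqn0 => /eqP ->; rewrite Pi_nil subrK.
rewrite leq_eqVlt => /orP[/eqP ->|]; first by rewrite Pi_nil subrK.
rewrite ltnS => lu; rewrite Pi_recr //.
apply: le_trans (_ : (1 - hf ^+ l + hf ^+ u) * E u.+1 <= _); last first.
  by rewrite ler_wpM2r // ?IH // ltW // E_gt0.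
have h1 := hfX_mono l u lu; have h2 := hfX_ge0 u; have h5 := hfX_le1 l.
have h6 : 0 <= hf ^+ u * (hf ^+ l - hf ^+ u) by rewrite mulr_ge0 // subr_ge0.
rewrite /c2.E exprS; set q := hf ^+ u in h1 h2 h6 *; set p := hf ^+ l in h1 h5 h6 *.
rewrite hf_half; nra.
Qed.

Lemma prob_ge m a : (1 <= a)%N -> (a <= m)%N ->
  (Nrk m m (m - a)%N)%:R * hf ^+ (m * m) <= prob_hits_gt R m (Uset m) (2 ^ a - 2)%N.
Proof.
move=> a1 am; rewrite /prob_hits_gt card_mx card_F2 ler_pdivlMr; last first.
  by rewrite ltr0n expn_gt0.
have -> : (Nrk m m (m - a)%N)%:R * hf ^+ (m * m) * (2 ^ (m * (1 + m)))%:R =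
          (2 ^ m * Nrk m m (m - a)%N)%:R :> R.
  rewrite mulnDr muln1 expnD !natrM.
  transitivity ((Nrk m m (m - a)%N)%:R * (2 ^ m)%:R * ((2 ^ (m * m))%:R * hf ^+ (m * m)) : R).
    ring.
  by rewrite pow2hf mulr1 mulrC.
rewrite ler_nat; apply: leq_trans (count_B m (m - a)%N) _.
exact: subset_leq_card (@event_sub m a a1 am).
Qed.

Lemma value_closed m a : (a <= m)%N ->
  (Nrk m m (m - a)%N)%:R * hf ^+ (m * m) =
  hf ^+ (a * a) * Pi a m * Pi (m - a)%N m / Pi 0 a.
Proof.
move=> am; have := @closed_form R m m (m - a) (leq_subr _ _) (leq_subr _ _).
rewrite subKn // => <-; rewrite mulfK //; exact/lt0r_neq0/Pi_gt0.
Qed.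

Lemma gamma_ge a : Pi 0 a * (1 - hf ^+ a.+1) ^+ 2 <= gamma_const R.
Proof.
have seqE : (fun N : nat => \prod_(1 <= j < N.+1) (1 - (2%:R : R) ^- j)) = Pi 0.
  apply: funext => N; rewrite /c2.Pi; apply: eq_bigr => j _.
  by rewrite /c2.E /c2.hf exprVn.
rewrite /gamma_const seqE; apply: limr_ge.
  apply: nonincreasing_is_cvgn.
    apply/nonincreasing_seqP => N; rewrite Pi_recr //.
    by rewrite ler_piMr ?E_le1 // ltW // Pi_gt0.
  by exists 0 => _ [N _ <-]; exact/ltW/Pi_gt0.
exists a.+1 => // N /= HN.
have -> : Pi 0 N = Pi 0 a * Pi a N.
  by rewrite [LHS]/c2.Pi (@big_cat_nat _ _ _ a.+1) //= ltnW.
rewrite ler_wpM2l //; first exact: ltW (Pi_gt0 0 a).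
rewrite (@Pi_recl R a N) // expr2.
have := Pi_ge (a.+1) N HN; have := hfX_ge0 N; have := E_gt0 (a.+1) isT.
rewrite /c2.E; set x := hf ^+ a.+1; set y := hf ^+ N; set P := Pi a.+1 N; move=> h1 h2 h3; nra.
Qed.

Lemma liminf_ge (u : nat -> R) T M0 : (forall n, 0 <= u n <= 1) ->
  (forall n, (M0 <= n)%N -> T <= u n) -> T <= limn_inf u.
Proof.
move=> u01 hT.
have bu : bounded_fun u.
  have ? : ProperFilter (globally [set: nat]) by exact: (@globally_properfilter _ _ 0%N).
  apply/ex_bound; exists 1 => n _ /=.
  by have /andP[h0 h1] := u01 n; rewrite ger0_norm.
rewrite limn_infE //.
apply: le_trans (_ : T <= infs u M0) _.
  rewrite /infs /=; apply: lb_le_inf; first by exists (u M0); exists M0 => /=.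
  by move=> _ [n /= Hn <-]; apply: hT.
apply: ub_le_sup; first exact: bounded_fun_has_ubound_infs.
by exists M0.
Qed.

End S.

End c4.
Import c4.

Theorem proposition2p4 (R : realType) (a : nat) (ha : (1 <= a)%N) :
  exists (n : nat -> nat) (U : forall m : nat, {set 'cV['F_2]_(n m)}),
    (forall m : nat, 0 \notin U m /\ #|U m| = (2 ^ m)%N) /\
    (gamma_const R)^-1 * (2%:R : R) ^- (a ^ 2) * (1 - (2%:R : R) ^- a) ^+ 2
      <= limn_inf (fun m : nat => prob_hits_gt R m (U m) (2 ^ a - 2)%N).
Proof.
exists (fun m => (1 + m)%N), Uset; split; first exact: Uset_prop.
apply: (@liminf_ge R _ _ (3 * a + 2)%N).
  move=> m; rewrite /prob_hits_gt; apply/andP; split; first by rewrite divr_ge0.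
  rewrite ler_pdivrMr ?mul1r ?ler_nat ?max_card //.
  by rewrite card_mx card_F2 ltr0n expn_gt0.
move=> m Hm; have am : (a <= m)%N by lia.
apply: le_trans (@prob_ge R m a ha am); rewrite value_closed //.
have e1 : (2%:R : R) ^- (a ^ 2) = (hf R) ^+ (a * a) by rewrite /hf exprVn mulnn.
have e2 : (2%:R : R) ^- a = (hf R) ^+ a by rewrite /hf exprVn.
rewrite e1 e2.
have g := gamma_ge R a.
set P := Pi R 0 a in g *.
set u := (hf R) ^+ a.+1 in g.
have Pgt0 : 0 < P by apply: Pi_gt0.
have ha2 : (hf R) ^+ a = 2 * u by rewrite /u exprSr hf_half; field.
have u0 : 0 <= u by apply: hfX_ge0.
have u1 : u <= 1 / 4.
  have := hfX_mono R 1 a ha; rewrite ha2 expr1 hf_half; lra.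
set eps := (hf R) ^+ (m - a).
have eps0 : 0 <= eps by apply: hfX_ge0.
have u2 : u ^+ 2 <= 1 by rewrite expr2; nra.
have epsu : eps <= u ^+ 2.
  rewrite /eps /u -exprM; apply: hfX_mono; lia.
have Pa : 1 - (hf R) ^+ a <= Pi R a m.
  by apply: le_trans (Pi_ge R a m am); have := hfX_ge0 R m; lra.
have Pma : 1 - eps <= Pi R (m - a) m.
  by apply: le_trans (Pi_ge R (m - a)%N m (leq_subr a m)); rewrite -/eps; have := hfX_ge0 R m; lra.
rewrite ha2 in Pa *.
set X := (hf R) ^+ (a * a).
have X0 : 0 < X by apply: exprn_gt0; apply: hf_gt0.
set Y := 1 - 2 * u in Pa *.
have Y0 : 0 <= Y by rewrite /Y; lra.
have key : Y <= (1 - eps) * (1 - u) ^+ 2.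
  have h : eps * (1 - u) ^+ 2 <= eps.
    rewrite ler_piMr //; rewrite expr2; nra.
  rewrite /Y expr2 in h *; nra.
have gpos : 0 < gamma_const R.
  apply: lt_le_trans g; apply: mulr_gt0 => //; rewrite expr2; nra.
apply: le_trans (_ : X * Y * (1 - eps) / P <= _); last first.
  rewrite ler_pM2r ?invr_gt0 //.
  rewrite -mulrA -[X * _ * _]mulrA ler_pM2l //.
  apply: ler_pM => //; lra.
set G := gamma_const R in g gpos *.
have -> : G^-1 * X * Y ^+ 2 = (X * Y ^+ 2) / G by ring.
rewrite ler_pdivrMr //.
apply: le_trans (_ : X * Y * (1 - eps) / P * (P * (1 - u) ^+ 2) <= _); last first.
  rewrite ler_wpM2l //; apply: divr_ge0; last exact: ltW.
  by apply: mulr_ge0; [exact: mulr_ge0 (ltW X0) Y0 | lra].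
have -> : X * Y * (1 - eps) / P * (P * (1 - u) ^+ 2) = X * Y * ((1 - eps) * (1 - u) ^+ 2).
  by field; apply: lt0r_neq0.
rewrite expr2 -mulrA ler_pM2l //; apply: ler_wpM2l => //.
Qed.
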